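(* Let $X$ have a pdf $f$ satisfying Conditions (A) and (B) below. For $\delta>0$ let $D=D(Q_{\mathrm{uni}}^\delta)$ be the mean-squared distortion of the uniform quantizer with cell size $\delta$. Then $$\lim_{\delta\to0}\frac{\mathrm{AoI}(S_{\mathrm z},Q_{\mathrm{uni}}^\delta,F^* )}{\log_2 D}=-\frac34$$ and $$\lim_{\delta\to0}\Big[\mathrm{AoI}(S_{\mathrm z},Q_{\mathrm{uni}}^\delta,F^* )+\tfrac32\log_2\delta\Big]=\tfrac32 h(X).$$
   Context: Let $X$ be a real random variable with pdf $f$. Condition (A): $f$ is continuous and differentiable, and its support is a bounded interval $I$. Condition (B): the integrals $\int_I f(x)\log_2^2 f(x)\,dx$ and the differential entropy $h(X)=-\int_I f(x)\log_2 f(x)\,dx$ exist and are finite. Quantizers. A quantizer $Q$ partitions $I$ into intervals $[a_{i-1},a_i]$ with representation points $c_i$. Write $p_i=P(X\in[a_{i-1},a_i])$. The mean-squared distortion is $D(Q)=\sum_i\int_{a_{i-1}}^{a_i}(x-c_i)^2f(x)\,dx$. The uniform quantizer $Q_{\mathrm{uni}}^\delta$ partitions $I$ into consecutive cells of length $\delta$, with representation points at the cell midpoints. Codes. A real-valued code assigns lengths $l_i\in\mathbb R^+$ to the cells, subject to $\sum_i2^{-l_i}\le1$. The random codeword length is $L=l_i$ when $X$ is in cell $i$. Objective. Under the zero-wait sampling policy $S_{\mathrm z}$, the AoI of a code $l$ is $\mathrm{AoI}(S_{\mathrm z},Q,l)=\frac{E[L^2]}{2E[L]}+E[L]$. We write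 $\mathrm{AoI}(S_{\mathrm z},Q,F^* )=\inf_l\mathrm{AoI}(S_{\mathrm z},Q,l)$, the infimum over real-valued codes; this is the value of the real-valued AoI-optimal code $F^*$. *)

(* Defs.v *)
From Stdlib Require Import Reals List.
From Coquelicot Require Import Coquelicot.
Open Scope R_scope.

Definition log2 (x : R) : R := ln x / ln 2.

Definition fsum (N : nat) (g : nat -> R) : R :=
  fold_right Rplus 0 (map g (seq 0 N)).

Definition is_pdf_with_support (f : R -> R) (a b : R) : Prop :=
  a < b /\
  (forall x, 0 <= f x) /\
  (forall x, (x < a \/ b < x) -> f x = 0) /\
  ex_RInt f a b /\ RInt f a b = 1 /\
  (* every point of [a,b] is a limit of points where f > 0, i.e. the support
     (closure of {f > 0}) is exactly [a,b] *)
  (forall x, a <= x <= b -> forall eps, 0 < eps ->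
     exists y, Rabs (y - x) < eps /\ 0 < f y).

Definition condition_A (f : R -> R) (a b : R) : Prop :=
  (forall x, a <= x <= b ->
     filterlim f (within (fun y => a <= y <= b) (locally x)) (locally (f x))) /\
  (forall x, a < x < b -> ex_derive f x).

(* Condition (B): the integrals of f log2^2 f and f log2 f over I exist
   (finite).  Convention 0 log 0 = 0 holds since Stdlib's ln 0 = 0. *)
Definition condition_B (f : R -> R) (a b : R) : Prop :=
  ex_RInt (fun x => f x * (log2 (f x)) ^ 2) a b /\
  ex_RInt (fun x => f x * log2 (f x)) a b.

Definition diff_entropy (f : R -> R) (a b : R) : R :=
  - RInt (fun x => f x * log2 (f x)) a b.

(* number of cells = ceil((b-a)/delta) *)
Definition ncells (a b delta : R) : nat :=
  Z.to_nat (- Int_part (- ((b - a) / delta))).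
Definition cell_lo (a delta : R) (i : nat) : R := a + INR i * delta.
Definition cell_hi (a b delta : R) (i : nat) : R := Rmin (a + INR (S i) * delta) b.
Definition cell_mid (a b delta : R) (i : nat) : R :=
  (cell_lo a delta i + cell_hi a b delta i) / 2.

Definition uni_prob (f : R -> R) (a b delta : R) (i : nat) : R :=
  RInt f (cell_lo a delta i) (cell_hi a b delta i).

Definition uni_distortion (f : R -> R) (a b delta : R) : R :=
  fsum (ncells a b delta) (fun i =>
    RInt (fun x => (x - cell_mid a b delta i) ^ 2 * f x)
         (cell_lo a delta i) (cell_hi a b delta i)).

Definition real_code (N : nat) (l : nat -> R) : Prop :=
  (forall i, (i < N)%nat -> 0 < l i) /\
  fsum N (fun i => Rpower 2 (- l i)) <= 1.

Definition AoI_zw (N : nat) (p l : nat -> R) : R :=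
  let EL := fsum N (fun i => p i * l i) in
  let EL2 := fsum N (fun i => p i * (l i) ^ 2) in
  EL2 / (2 * EL) + EL.

(* AoI(S_z, Q, F-star) = infimum over real-valued codes *)
Definition AoI_opt (N : nat) (p : nat -> R) : R :=
  real (Glb_Rbar (fun v => exists l, real_code N l /\ v = AoI_zw N p l)).

Definition AoI_uni_opt (f : R -> R) (a b delta : R) : R :=
  AoI_opt (ncells a b delta) (uni_prob f a b delta).

(* Main.v *)
Require Import Defs.
From Stdlib Require Import Reals Lra Lia List ZArith.
From Coquelicot Require Import Coquelicot.
Open Scope R_scope.

Lemma fold_plus_c (l : list R) c : fold_right Rplus c l = fold_right Rplus 0 l + c.
Proof. induction l as [|x l IH]; simpl; [ring| rewrite IH; ring]. Qed.

Lemma fsum_0 g : fsum 0 g = 0.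
Proof. reflexivity. Qed.

Lemma fsum_S n g : fsum (S n) g = fsum n g + g n.
Proof.
  unfold fsum. rewrite seq_S, map_app, fold_right_app. simpl.
  rewrite fold_plus_c. ring.
Qed.

Lemma fsum_ext n g h : (forall i, (i < n)%nat -> g i = h i) -> fsum n g = fsum n h.
Proof.
  induction n as [|n IH]; intros E; [reflexivity|].
  rewrite !fsum_S, IH by (intros; apply E; lia). rewrite E by lia. reflexivity.
Qed.

Lemma fsum_plus n g h : fsum n (fun i => g i + h i) = fsum n g + fsum n h.
Proof. induction n as [|n IH]; [simpl; unfold fsum; simpl; ring|]. rewrite !fsum_S, IH. ring. Qed.

Lemma fsum_scal n c g : fsum n (fun i => c * g i) = c * fsum n g.
Proof. induction n as [|n IH]; [unfold fsum; simpl; ring|]. rewrite !fsum_S, IH. ring. Qed.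

Lemma fsum_opp n g : fsum n (fun i => - g i) = - fsum n g.
Proof. induction n as [|n IH]; [unfold fsum; simpl; ring|]. rewrite !fsum_S, IH. ring. Qed.

Lemma fsum_le n g h : (forall i, (i < n)%nat -> g i <= h i) -> fsum n g <= fsum n h.
Proof.
  induction n as [|n IH]; intros E; [unfold fsum; simpl; lra|].
  rewrite !fsum_S. assert (fsum n g <= fsum n h) by (apply IH; intros; apply E; lia).
  assert (g n <= h n) by (apply E; lia). lra.
Qed.

Lemma fsum_const n c : fsum n (fun _ => c) = INR n * c.
Proof. induction n as [|n IH]; [unfold fsum; simpl; ring|]. rewrite fsum_S, IH, S_INR. ring. Qed.

Lemma fsum_abs n g : Rabs (fsum n g) <= fsum n (fun i => Rabs (g i)).
Proof.
  induction n as [|n IH]; [unfold fsum; simpl; rewrite Rabs_R0; lra|].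
  rewrite !fsum_S. eapply Rle_trans; [apply Rabs_triang|]. lra.
Qed.

Lemma fsum_nonneg n g : (forall i, (i < n)%nat -> 0 <= g i) -> 0 <= fsum n g.
Proof.
  intros E. replace 0 with (fsum n (fun _ => 0)).
  - apply fsum_le; auto.
  - rewrite fsum_const; ring.
Qed.

Lemma fsum_pos n g : (0 < n)%nat -> (forall i, (i < n)%nat -> 0 < g i) -> 0 < fsum n g.
Proof.
  intros Hn E. destruct n as [|n]; [lia|]. rewrite fsum_S.
  assert (0 <= fsum n g) by (apply fsum_nonneg; intros; left; apply E; lia).
  assert (0 < g n) by (apply E; lia). lra.
Qed.

Lemma fsum_ge_one n g i : (forall k, (k < n)%nat -> 0 <= g k) -> (i < n)%nat -> g i <= fsum n g.
Proof.
  induction n as [|n IH]; intros E Hi; [lia|]. rewrite fsum_S.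
  destruct (Nat.eq_dec i n) as [->|Hne].
  - assert (0 <= fsum n g) by (apply fsum_nonneg; intros; apply E; lia). lra.
  - assert (g i <= fsum n g) by (apply IH; [intros; apply E; lia| lia]).
    assert (0 <= g n) by (apply E; lia). lra.
Qed.

Lemma fsum_ge_two n g i j : (forall k, (k < n)%nat -> 0 <= g k) -> (i < n)%nat -> (j < n)%nat ->
  i <> j -> g i + g j <= fsum n g.
Proof.
  induction n as [|n IH]; intros E Hi Hj Hij; [lia|]. rewrite fsum_S.
  destruct (Nat.eq_dec i n) as [->|Hne].
  - assert (g j <= fsum n g) by (apply fsum_ge_one; [intros; apply E; lia| lia]). lra.
  - destruct (Nat.eq_dec j n) as [->|Hne'].
    + assert (g i <= fsum n g) by (apply fsum_ge_one; [intros; apply E; lia| lia]). lra.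
    + assert (g i + g j <= fsum n g) by (apply IH; [intros; apply E; lia| lia|lia|auto]).
      assert (0 <= g n) by (apply E; lia). lra.
Qed.

Lemma ln_le_sub1 x : 0 < x -> ln x <= x - 1.
Proof.
  intros Hx. destruct (Req_dec (ln x) 0) as [E|E].
  - assert (x = 1). { rewrite <- (exp_ln x Hx), E. apply exp_0. } lra.
  - pose proof (exp_ineq1 _ E). rewrite exp_ln in H by auto. lra.
Qed.

Lemma ln2_pos : 0 < ln 2.
Proof. rewrite <- ln_1. apply ln_increasing; lra. Qed.

Lemma log2_neg x : 0 < x < 1 -> log2 x < 0.
Proof.
  intros Hx. unfold log2. pose proof ln2_pos.
  assert (ln x < 0). { rewrite <- ln_1. apply ln_increasing; lra. }
  apply Rmult_lt_reg_r with (ln 2); auto. field_simplify; lra.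
Qed.

Lemma Rpower2_log2 x : 0 < x -> Rpower 2 (log2 x) = x.
Proof.
  intros Hx. unfold Rpower, log2. pose proof ln2_pos.
  replace (ln x / ln 2 * ln 2) with (ln x) by (field; lra). apply exp_ln; auto.
Qed.

Lemma glb_bounds (E : R -> Prop) m v0 :
  E v0 -> (forall v, E v -> m <= v) -> m <= real (Glb_Rbar E) <= v0.
Proof.
  intros H0 Hlb. destruct (Glb_Rbar_correct E) as [Hl Hg].
  assert (A : Rbar_le (Glb_Rbar E) v0) by (apply Hl; auto).
  assert (B : Rbar_le m (Glb_Rbar E)) by (apply Hg; intros v Hv; apply Hlb; auto).
  destruct (Glb_Rbar E) as [g| |]; simpl in *; try contradiction; lra.
Qed.

Lemma AoI_opt_bounds N p : (2 <= N)%nat -> (forall i, (i < N)%nat -> 0 < p i) -> fsum N p = 1 ->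
  let H := - fsum N (fun i => p i * log2 (p i)) in
  let S2 := fsum N (fun i => p i * (log2 (p i))^2) in
  0 < H /\ 3/2*H <= AoI_opt N p <= S2/(2*H) + H.
Proof.
  intros HN Hp Hs H S2.
  assert (Hlt1 : forall i, (i < N)%nat -> p i < 1).
  { intros i Hi. set (j := if Nat.eq_dec i 0 then 1%nat else 0%nat).
    assert (j < N)%nat by (unfold j; destruct Nat.eq_dec; lia).
    assert (i <> j) by (unfold j; destruct Nat.eq_dec; lia).
    pose proof (fsum_ge_two N p i j (fun k Hk => Rlt_le _ _ (Hp k Hk)) Hi H0 H1).
    pose proof (Hp j H0). lra. }
  assert (HH : 0 < H).
  { unfold H. rewrite <- fsum_opp. apply fsum_pos; [lia|]. intros i Hi.
    pose proof (log2_neg (p i) (conj (Hp i Hi) (Hlt1 i Hi))). pose proof (Hp i Hi). nra. }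
  split; [exact HH|]. unfold AoI_opt. apply glb_bounds.
  - exists (fun i => - log2 (p i)). split.
    + split.
      * intros i Hi. pose proof (log2_neg (p i) (conj (Hp i Hi) (Hlt1 i Hi))). lra.
      * rewrite (fsum_ext _ _ p); [lra|]. intros i Hi. rewrite Ropp_involutive.
        apply Rpower2_log2; auto.
    + unfold AoI_zw. cbv zeta beta.
      replace (fsum N (fun i => p i * - log2 (p i))) with H.
      2:{ unfold H. rewrite <- fsum_opp. apply fsum_ext. intros; ring. }
      replace (fsum N (fun i => p i * (- log2 (p i))^2)) with S2.
      2:{ unfold S2. apply fsum_ext. intros; ring. }
      reflexivity.
  - intros v [l [[Hl Hk] ->]]. unfold AoI_zw. cbv zeta beta.
    set (EL := fsum N (fun i => p i * l i)).
    set (EL2 := fsum N (fun i => p i * l i ^ 2)).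
    assert (HEL : 0 < EL). { apply fsum_pos; [lia|]. intros i Hi. pose proof (Hp i Hi); pose proof (Hl i Hi); nra. }
    assert (Hvar : EL * EL <= EL2).
    { assert (0 <= fsum N (fun i => p i * (l i - EL)^2)).
      { apply fsum_nonneg. intros i Hi. pose proof (Hp i Hi). apply Rmult_le_pos; [lra|]. apply pow2_ge_0. }
      replace (fsum N (fun i => p i * (l i - EL)^2)) with
        (fsum N (fun i => p i * l i ^2) + (-2*EL) * fsum N (fun i => p i * l i) + (EL*EL) * fsum N p) in H0.
      2:{ rewrite <- !fsum_scal, <- !fsum_plus. apply fsum_ext; intros; ring. }
      fold EL EL2 in H0. rewrite Hs in H0. nra. }
    assert (Hgibbs : H <= EL).
    { assert (0 <= fsum N (fun i => p i * l i + p i * log2 (p i))).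
      { apply Rle_trans with (fsum N (fun i => (p i - Rpower 2 (- l i)) / ln 2)).
        - unfold Rdiv. rewrite (fsum_ext N _ (fun i => / ln 2 * (p i + - Rpower 2 (- l i)))) by (intros; ring).
          rewrite fsum_scal, fsum_plus, fsum_opp, Hs. pose proof ln2_pos.
          apply Rmult_le_pos; [left; apply Rinv_0_lt_compat; auto| lra].
        - apply fsum_le. intros i Hi. pose proof ln2_pos as L2. pose proof (Hp i Hi) as Hpi.
          assert (Hr : 0 < Rpower 2 (- l i)) by (apply exp_pos).
          pose proof (ln_le_sub1 (Rpower 2 (- l i) / p i) (Rdiv_lt_0_compat _ _ Hr Hpi)) as Hln.
          rewrite ln_div, ln_Rpower in Hln by auto.
          unfold log2. apply Rmult_le_reg_r with (ln 2); auto.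
          replace ((p i - Rpower 2 (- l i)) / ln 2 * ln 2) with (p i - Rpower 2 (- l i)) by (field; lra).
          replace ((p i * l i + p i * (ln (p i) / ln 2)) * ln 2) with (p i * l i * ln 2 + p i * ln (p i)) by (field; lra).
          apply Rmult_le_compat_l with (r := p i) in Hln; [|lra].
          replace (p i * (Rpower 2 (- l i) / p i - 1)) with (Rpower 2 (- l i) - p i) in Hln by (field; lra).
          replace (p i * (- l i * ln 2 - ln (p i))) with (- (p i * l i * ln 2 + p i * ln (p i))) in Hln by ring. lra. }
      rewrite fsum_plus in H0. unfold H. fold EL in H0. lra. }
    apply Rle_trans with (EL * EL / (2 * EL) + EL).
    + replace (EL * EL / (2 * EL)) with (EL/2) by (field; lra). lra.
    + apply Rplus_le_compat_r. apply Rmult_le_compat_r; [|lra].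
      left; apply Rinv_0_lt_compat; lra.
Qed.

Lemma AoI_decomp N p d : (2 <= N)%nat -> (forall i, (i < N)%nat -> 0 < p i) -> fsum N p = 1 -> 0 < d ->
  let A := fsum N (fun i => p i * log2 (p i / d)) in
  let B := fsum N (fun i => p i * (log2 (p i / d))^2) in
  0 < - log2 d - A /\
  0 <= AoI_opt N p + 3/2 * log2 d + 3/2 * A <= B / (2 * (- log2 d - A)).
Proof.
  intros HN Hp Hs Hd A B.
  destruct (AoI_opt_bounds N p HN Hp Hs) as [HH [Hlo Hhi]].
  set (H := - fsum N (fun i => p i * log2 (p i))) in *.
  set (S2 := fsum N (fun i => p i * (log2 (p i))^2)) in *.
  assert (Hsplit : forall i, (i < N)%nat -> log2 (p i) = log2 d + log2 (p i / d)).
  { intros i Hi. unfold log2. pose proof (Hp i Hi). rewrite <- Rdiv_plus_distr.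
    f_equal. rewrite <- ln_mult by (auto; apply Rdiv_lt_0_compat; auto). f_equal. field. lra. }
  assert (HHe : H = - log2 d - A).
  { unfold H, A. rewrite (fsum_ext N _ (fun i => log2 d * p i + p i * log2 (p i / d))).
    2:{ intros i Hi. rewrite Hsplit by auto. ring. }
    rewrite fsum_plus, fsum_scal, Hs. ring. }
  assert (HS2 : S2 = H * H + (B - A * A)).
  { unfold S2. rewrite (fsum_ext N _ (fun i => (log2 d)^2 * p i + (2 * log2 d * (p i * log2 (p i / d)) + p i * log2 (p i / d) ^ 2))).
    2:{ intros i Hi. rewrite Hsplit by auto. ring. }
    rewrite !fsum_plus, !fsum_scal, Hs. fold A B. rewrite HHe. ring. }
  rewrite <- HHe. split; [auto|].
  assert (0 <= B) by (apply fsum_nonneg; intros i Hi; pose proof (Hp i Hi); pose proof (pow2_ge_0 (log2 (p i / d))); nra).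
  rewrite HS2 in Hhi.
  replace ((H * H + (B - A * A)) / (2 * H) + H) with (3/2 * H + (B - A*A)/(2*H)) in Hhi by (field; lra).
  split; [rewrite HHe in Hlo; lra|].
  assert ((B - A * A) / (2 * H) <= B / (2 * H)).
  { unfold Rdiv. apply Rmult_le_compat_r; [left; apply Rinv_0_lt_compat; lra|]. nra. }
  rewrite HHe in Hhi. rewrite <- HHe in *. lra.
Qed.

Definition clamp (a b x : R) := Rmax a (Rmin b x).
Definition Fc (f : R -> R) a b x := f (clamp a b x).
Definition phi (x : R) := x * ln x.
Definition Gc f a b x := phi (Fc f a b x).

Ltac dest_minmax := unfold Rmax, Rmin in *; repeat match goal with
  | |- context[Rle_dec ?x ?y] => destruct (Rle_dec x y)
  | H : context[Rle_dec ?x ?y] |- _ => destruct (Rle_dec x y) end.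

Lemma clamp_in a b x : a <= b -> a <= clamp a b x <= b.
Proof. intros. unfold clamp. dest_minmax; lra. Qed.

Lemma clamp_id a b x : a <= x <= b -> clamp a b x = x.
Proof. intros. unfold clamp. dest_minmax; lra. Qed.

Lemma clamp_lip a b x y : a <= b -> Rabs (clamp a b x - clamp a b y) <= Rabs (x - y).
Proof.
  intros. unfold clamp. unfold Rabs. dest_minmax;
  repeat match goal with |- context[Rcase_abs ?z] => destruct (Rcase_abs z) end; lra.
Qed.

Lemma ball_R (x e y : R) : ball x e y <-> Rabs (y - x) < e.
Proof. reflexivity. Qed.

Lemma tsq_le_exp t : 0 <= t -> t * t <= 4 * exp t.
Proof.
  intros Ht. destruct (Req_dec t 0) as [->|Hne].
  - pose proof (exp_pos 0). lra.
  - assert (t / 2 <> 0) by lra. pose proof (exp_ineq1 _ H).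
    replace (exp t) with (exp (t/2) * exp (t/2)) by (rewrite <- exp_plus; f_equal; field).
    nra.
Qed.

Lemma psi_le1 u : 0 < u <= 1 -> u * (ln u) ^ 2 <= 4.
Proof.
  intros Hu. set (t := - ln u).
  assert (Ht : 0 <= t). { unfold t. destruct (Req_dec u 1) as [->|]. rewrite ln_1; lra.
    assert (ln u < ln 1) by (apply ln_increasing; lra). rewrite ln_1 in H0. lra. }
  assert (Hu' : u = / exp t). { unfold t. rewrite exp_Ropp, exp_ln by lra. field. lra. }
  pose proof (tsq_le_exp t Ht). pose proof (exp_pos t).
  replace ((ln u)^2) with (t*t) by (unfold t; ring). rewrite Hu'.
  apply Rmult_le_reg_l with (exp t); auto. field_simplify; lra.
Qed.

Lemma psi_bound u K : 0 < u <= K -> 1 <= K -> 0 <= u * (ln u) ^ 2 <= 4 + K*K*K.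
Proof.
  intros Hu HK. split. { pose proof (pow2_ge_0 (ln u)); nra. }
  destruct (Rle_dec u 1). { pose proof (psi_le1 u (conj (proj1 Hu) r)). nra. }
  assert (0 <= ln u) by (rewrite <- ln_1; left; apply ln_increasing; lra).
  pose proof (ln_le_sub1 u (proj1 Hu)).
  assert (ln u ^ 2 <= u * u) by nra.
  assert (u * (ln u)^2 <= u * (u*u)) by (apply Rmult_le_compat_l; lra).
  assert (u*(u*u) <= K*K*K). { assert (u*u <= K*K) by nra. nra. }
  lra.
Qed.

Lemma phi_bound u K : 0 <= u <= K -> 1 <= K -> Rabs (phi u) <= 1 + K*K.
Proof.
  intros Hu HK. unfold phi. destruct (Req_dec u 0) as [->|Hne].
  { rewrite Rmult_0_l, Rabs_R0. nra. }
  destruct (Rle_dec u 1).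
  - assert (ln u <= 0) by (rewrite <- ln_1; destruct (Req_dec u 1) as [->|]; [lra| left; apply ln_increasing; lra]).
    pose proof (ln_le_sub1 (/u) ltac:(apply Rinv_0_lt_compat; lra)). rewrite ln_Rinv in H0 by lra.
    rewrite Rabs_left1 by nra.
    assert (u * - ln u <= u * (/u - 1)) by (apply Rmult_le_compat_l; lra).
    replace (u * (/u - 1)) with (1 - u) in H1 by (field; lra). nra.
  - assert (0 <= ln u) by (rewrite <- ln_1; left; apply ln_increasing; lra).
    pose proof (ln_le_sub1 u ltac:(lra)). rewrite Rabs_pos_eq by nra. nra.
Qed.

Lemma phi_small u : 0 <= u <= 1 -> phi u * phi u <= 4 * u.
Proof.
  intros Hu. unfold phi. destruct (Req_dec u 0) as [->|]. { lra. }
  pose proof (psi_le1 u ltac:(lra)). nra.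
Qed.

Lemma ncells_facts a b d : 0 < d < b - a ->
  (2 <= ncells a b d)%nat /\ a + (INR (ncells a b d) - 1) * d < b /\ b <= a + INR (ncells a b d) * d.
Proof.
  intros Hd. set (t := (b - a) / d).
  assert (Ht : 1 < t). { unfold t. apply Rmult_lt_reg_r with d; [lra|]. unfold Rdiv. rewrite Rmult_assoc, Rinv_l; lra. }
  assert (Htd : t * d = b - a) by (unfold t; field; lra).
  unfold ncells. fold t.
  destruct (base_Int_part (- t)) as [H1 H2].
  set (z := (- Int_part (- t))%Z).
  assert (Hz : IZR z = - IZR (Int_part (-t))) by (unfold z; rewrite opp_IZR; reflexivity).
  assert (Hz1 : t <= IZR z) by lra.
  assert (Hz2 : IZR z < t + 1) by lra.
  assert (Hz2' : (2 <= z)%Z). { assert (1 < IZR z) by lra. apply lt_IZR in H. lia. }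
  assert (HN : INR (Z.to_nat z) = IZR z) by (rewrite INR_IZR_INZ, Z2Nat.id; [reflexivity| lia]).
  split; [lia|]. rewrite HN. split; nra.
Qed.

Lemma cell_hi_full a b d i : 0 < d < b - a -> (S i < ncells a b d)%nat ->
  cell_hi a b d i = a + INR (S i) * d.
Proof.
  intros Hd Hi. destruct (ncells_facts a b d Hd) as [_ [H1 _]].
  unfold cell_hi. apply Rmin_left.
  assert (INR (S i) <= INR (ncells a b d) - 1).
  { assert (S (S i) <= ncells a b d)%nat by lia. apply le_INR in H. rewrite S_INR in H. lra. }
  nra.
Qed.

Lemma cell_hi_last a b d n : 0 < d < b - a -> ncells a b d = S n -> cell_hi a b d n = b.
Proof.
  intros Hd Hn. destruct (ncells_facts a b d Hd) as [_ [_ H2]].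
  unfold cell_hi. apply Rmin_right. rewrite Hn in H2. lra.
Qed.

Lemma cell_lo_lt_hi a b d i : 0 < d < b - a -> (i < ncells a b d)%nat ->
  a <= cell_lo a d i < cell_hi a b d i /\ cell_hi a b d i <= b /\ cell_hi a b d i - cell_lo a d i <= d.
Proof.
  intros Hd Hi. destruct (ncells_facts a b d Hd) as [_ [H1 H2]].
  pose proof (pos_INR i).
  assert (INR i <= INR (ncells a b d) - 1).
  { assert (S i <= ncells a b d)%nat by lia. apply le_INR in H0. rewrite S_INR in H0. lra. }
  unfold cell_lo, cell_hi. rewrite S_INR. split; [split|split].
  - nra.
  - apply Rmin_glb_lt; nra.
  - apply Rmin_r.
  - pose proof (Rmin_l (a + (INR i + 1) * d) b). nra.
Qed.

Lemma telescope (g : R -> R) a d k : (forall u v, ex_RInt g u v) ->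
  fsum k (fun i => RInt g (a + INR i * d) (a + INR (S i) * d)) = RInt g a (a + INR k * d).
Proof.
  intros Hex. induction k as [|k IH].
  - simpl. rewrite Rmult_0_l, Rplus_0_r, RInt_point. reflexivity.
  - rewrite fsum_S, IH. exact (RInt_Chasles g _ _ _ (Hex _ _) (Hex _ _)).
Qed.

Lemma cells_sum (g : R -> R) a b d : 0 < d < b - a -> (forall u v, ex_RInt g u v) ->
  fsum (ncells a b d) (fun i => RInt g (cell_lo a d i) (cell_hi a b d i)) = RInt g a b.
Proof.
  intros Hd Hex. destruct (ncells_facts a b d Hd) as [HN _].
  destruct (ncells a b d) as [|n] eqn:E; [lia|].
  rewrite fsum_S. rewrite (cell_hi_last a b d n Hd E).
  rewrite (fsum_ext n _ (fun i => RInt g (a + INR i * d) (a + INR (S i) * d))).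
  2:{ intros i Hi. rewrite cell_hi_full by (auto; lia). reflexivity. }
  rewrite telescope by auto. unfold cell_lo.
  exact (RInt_Chasles g _ _ _ (Hex _ _) (Hex _ _)).
Qed.

Section Ana.
Variables (f : R -> R) (a b : R).
Hypothesis Hpdf : is_pdf_with_support f a b.
Hypothesis HA : condition_A f a b.

Lemma hab : a < b.
Proof. destruct Hpdf; lra. Qed.

Lemma Fc_eq x : a <= x <= b -> Fc f a b x = f x.
Proof. intros. unfold Fc. rewrite clamp_id; auto. Qed.

Lemma Fc_nonneg x : 0 <= Fc f a b x.
Proof. unfold Fc. destruct Hpdf as [_ [H _]]. apply H. Qed.

Lemma Fc_cont x : continuous (Fc f a b) x.
Proof.
  pose proof hab as Hab.
  destruct HA as [Hc _].
  set (c := clamp a b x).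
  assert (Hcin : a <= c <= b) by (apply clamp_in; lra).
  unfold continuous, Fc. fold c.
  eapply filterlim_comp; [|apply (Hc c Hcin)].
  intros P [eps HP]. exists eps. intros y Hy. apply HP.
  - apply ball_R. eapply Rle_lt_trans; [apply clamp_lip; lra|]. apply Hy.
  - apply clamp_in; lra.
Qed.

Lemma Fc_contpt x : continuity_pt (Fc f a b) x.
Proof. apply continuity_pt_filterlim. apply Fc_cont. Qed.

Lemma Fc_bound : exists M, 1 <= M /\ forall x, Fc f a b x <= M.
Proof.
  pose proof hab.
  destruct (continuity_ab_maj (Fc f a b) a b ltac:(lra) (fun c _ => Fc_contpt c)) as [xm [Hm _]].
  exists (Rmax 1 (Fc f a b xm)). split; [apply Rmax_l|].
  intros x. unfold Fc at 1. rewrite <- (clamp_id a b (clamp a b x)) by (apply clamp_in; lra).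
  fold (Fc f a b (clamp a b x)). eapply Rle_trans; [apply Hm; apply clamp_in; lra| apply Rmax_r].
Qed.

Lemma Gc_cont x : continuous (Gc f a b) x.
Proof.
  destruct (Rlt_dec 0 (Fc f a b x)) as [Hp|Hn].
  - unfold Gc. apply (continuous_comp (Fc f a b) phi); [apply Fc_cont|].
    unfold phi. apply (continuous_mult (fun y => y) ln); [apply continuous_id| apply continuous_ln; auto].
  - assert (H0 : Fc f a b x = 0) by (pose proof (Fc_nonneg x); lra).
    unfold continuous. apply filterlim_locally. intros eps.
    assert (Hr : 0 < Rmin 1 (eps * eps / 4)).
    { apply Rmin_glb_lt; [lra|]. pose proof (cond_pos eps). nra. }
    pose proof (proj1 (filterlim_locally (Fc f a b) (Fc f a b x)) (Fc_cont x) (mkposreal _ Hr)) as HF.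
    eapply filter_imp; [|exact HF]. intros y Hy. rewrite ball_R in *. simpl in Hy.
    unfold Gc. rewrite H0 in *. unfold phi at 2. rewrite Rmult_0_l, Rminus_0_r.
    rewrite Rminus_0_r in Hy. pose proof (Fc_nonneg y) as Hy0. rewrite Rabs_pos_eq in Hy by auto.
    assert (Fc f a b y <= 1) by (pose proof (Rmin_l 1 (eps*eps/4)); lra).
    assert (Fc f a b y < eps * eps / 4) by (pose proof (Rmin_r 1 (eps*eps/4)); lra).
    pose proof (phi_small (Fc f a b y) (conj Hy0 H)).
    pose proof (cond_pos eps). apply Rabs_def1; nra.
Qed.

Lemma Gc_contpt x : continuity_pt (Gc f a b) x.
Proof. apply continuity_pt_filterlim. apply Gc_cont. Qed.

Lemma Fc_UC : uniform_continuity (Fc f a b) (fun c => a <= c <= b).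
Proof. apply Heine; [apply compact_P3| intros; apply Fc_contpt]. Qed.

Lemma Gc_UC : uniform_continuity (Gc f a b) (fun c => a <= c <= b).
Proof. apply Heine; [apply compact_P3| intros; apply Gc_contpt]. Qed.

Lemma Fc_exRInt u v : ex_RInt (Fc f a b) u v.
Proof. apply (@ex_RInt_continuous R_CompleteNormedModule). intros; apply Fc_cont. Qed.

Lemma Gc_exRInt u v : ex_RInt (Gc f a b) u v.
Proof. apply (@ex_RInt_continuous R_CompleteNormedModule). intros; apply Gc_cont. Qed.

Lemma Fc_MVT lo hi : lo < hi -> exists xi, lo <= xi <= hi /\ RInt (Fc f a b) lo hi = (hi - lo) * Fc f a b xi.
Proof.
  intros Hlh.
  destruct (continuity_ab_min (Fc f a b) lo hi ltac:(lra) (fun c _ => Fc_contpt c)) as [xm [Hm Hxm]].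
  destruct (continuity_ab_maj (Fc f a b) lo hi ltac:(lra) (fun c _ => Fc_contpt c)) as [xM [HM HxM]].
  set (y := RInt (Fc f a b) lo hi / (hi - lo)).
  assert (Hlo : Fc f a b xm <= y).
  { unfold y. apply Rmult_le_reg_r with (hi - lo); [lra|]. unfold Rdiv. rewrite Rmult_assoc, Rinv_l, Rmult_1_r by lra.
    replace (Fc f a b xm * (hi - lo)) with (RInt (fun _ => Fc f a b xm) lo hi) by (rewrite RInt_const; simpl; unfold scal; simpl; unfold mult; simpl; ring).
    apply RInt_le; [lra| apply ex_RInt_const| apply Fc_exRInt|]. intros; apply Hm; lra. }
  assert (Hhi : y <= Fc f a b xM).
  { unfold y. apply Rmult_le_reg_r with (hi - lo); [lra|]. unfold Rdiv. rewrite Rmult_assoc, Rinv_l, Rmult_1_r by lra.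
    replace (Fc f a b xM * (hi - lo)) with (RInt (fun _ => Fc f a b xM) lo hi) by (rewrite RInt_const; simpl; unfold scal; simpl; unfold mult; simpl; ring).
    apply RInt_le; [lra| apply Fc_exRInt| apply ex_RInt_const|]. intros; apply HM; lra. }
  assert (Hc : continuity (Fc f a b)) by (intro; apply Fc_contpt).
  destruct (IVT_gen (Fc f a b) xm xM y Hc) as [xi [Hxi Heq]].
  { split; [apply Rle_trans with (Fc f a b xm); [apply Rmin_l| auto]| apply Rle_trans with (Fc f a b xM); [auto| apply Rmax_r]]. }
  exists xi. split.
  - split; [apply Rle_trans with (Rmin xm xM); [apply Rmin_glb; lra| lra]| apply Rle_trans with (Rmax xm xM); [lra| apply Rmax_lub; lra]].
  - rewrite Heq. unfold y. unfold Rdiv. rewrite (Rmult_comm (RInt _ _ _)), <- Rmult_assoc, Rinv_r, Rmult_1_l; [reflexivity| lra].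
Qed.

Lemma RInt_pos_point (g : R -> R) lo hi y : (forall x, continuous g x) -> (forall x, 0 <= g x) ->
  lo < y < hi -> 0 < g y -> 0 < RInt g lo hi.
Proof.
  intros Hc Hn Hy Hgy.
  assert (He : 0 < g y / 2) by lra.
  pose proof (proj1 (filterlim_locally g (g y)) (Hc y) (mkposreal _ He)) as [rho Hrho].
  set (c := Rmax lo (y - rho/2)). set (d := Rmin hi (y + rho/2)).
  pose proof (cond_pos rho).
  assert (lo <= c < y) by (unfold c; dest_minmax; lra).
  assert (y < d <= hi) by (unfold d; dest_minmax; lra).
  assert (Hex : forall u v, ex_RInt g u v) by (intros; apply (@ex_RInt_continuous R_CompleteNormedModule); intros; apply Hc).
  rewrite <- (RInt_Chasles g lo c hi), <- (RInt_Chasles g c d hi) by auto.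
  assert (0 <= RInt g lo c) by (apply RInt_ge_0; auto; lra).
  assert (0 <= RInt g d hi) by (apply RInt_ge_0; auto; lra).
  assert (0 < RInt g c d).
  { apply RInt_gt_0; [lra| |intros; apply Hc]. intros x Hx.
    assert (ball y rho x) by (apply ball_R; unfold c, d in *; dest_minmax; apply Rabs_def1; lra).
    specialize (Hrho x H4). apply ball_R in Hrho. simpl in Hrho. change (Rabs (g x - g y) < g y / 2) in Hrho. apply Rabs_def2 in Hrho. lra. }
  simpl. unfold plus; simpl. lra.
Qed.


Lemma sq_int m u v : RInt (fun x => (x - m)^2) u v = ((v - m)^3 - (u - m)^3)/3.
Proof.
  apply is_RInt_unique.
  replace (((v - m)^3 - (u - m)^3)/3) with (minus ((fun x => (x-m)^3/3) v) ((fun x => (x-m)^3/3) u)) by (unfold minus, plus, opp; simpl; field).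
  apply (is_RInt_derive (fun x => (x-m)^3/3) (fun x => (x-m)^2)).
  - intros x _. auto_derive; [auto| field].
  - intros x _. apply (ex_derive_continuous (fun x => (x-m)^2)). auto_derive. auto.
Qed.

Lemma prob_eq d i : 0 < d < b - a -> (i < ncells a b d)%nat ->
  uni_prob f a b d i = RInt (Fc f a b) (cell_lo a d i) (cell_hi a b d i).
Proof.
  intros Hd Hi. destruct (cell_lo_lt_hi a b d i Hd Hi) as [[H1 H2] [H3 H4]].
  unfold uni_prob. apply RInt_ext. rewrite Rmin_left, Rmax_right by lra.
  intros x Hx. rewrite Fc_eq; auto; lra.
Qed.

Lemma prob_pos d i : 0 < d < b - a -> (i < ncells a b d)%nat -> 0 < uni_prob f a b d i.
Proof.
  intros Hd Hi. rewrite prob_eq by auto.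
  destruct (cell_lo_lt_hi a b d i Hd Hi) as [[H1 H2] [H3 H4]].
  set (lo := cell_lo a d i) in *. set (hi := cell_hi a b d i) in *.
  destruct Hpdf as [_ [_ [_ [_ [_ Hsupp]]]]].
  destruct (Hsupp ((lo + hi)/2) ltac:(lra) ((hi - lo)/2) ltac:(lra)) as [y [Hy Hfy]].
  apply Rabs_def2 in Hy.
  apply (RInt_pos_point _ lo hi y); [apply Fc_cont| apply Fc_nonneg| lra|].
  rewrite Fc_eq; auto; lra.
Qed.

Lemma prob_le M d i : (forall x, Fc f a b x <= M) -> 0 < d < b - a -> (i < ncells a b d)%nat ->
  uni_prob f a b d i <= M * d.
Proof.
  intros HM Hd Hi. rewrite prob_eq by auto.
  destruct (cell_lo_lt_hi a b d i Hd Hi) as [[H1 H2] [H3 H4]].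
  assert (0 <= M) by (pose proof (HM a); pose proof (Fc_nonneg a); lra).
  apply Rle_trans with (RInt (fun _ => M) (cell_lo a d i) (cell_hi a b d i)).
  - apply RInt_le; [lra| apply Fc_exRInt| apply ex_RInt_const| intros; apply HM].
  - rewrite RInt_const. simpl. unfold scal; simpl; unfold mult; simpl. nra.
Qed.

Lemma prob_sum d : 0 < d < b - a -> fsum (ncells a b d) (uni_prob f a b d) = 1.
Proof.
  intros Hd. rewrite (fsum_ext _ _ (fun i => RInt (Fc f a b) (cell_lo a d i) (cell_hi a b d i))).
  2:{ intros; apply prob_eq; auto. }
  rewrite cells_sum by (auto; apply Fc_exRInt).
  destruct Hpdf as [_ [_ [_ [_ [H1 _]]]]]. rewrite <- H1.
  apply RInt_ext. pose proof hab. rewrite Rmin_left, Rmax_right by lra.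
  intros x Hx. rewrite Fc_eq; auto; lra.
Qed.

Lemma prob_full d i : 0 < d < b - a -> (S i < ncells a b d)%nat ->
  cell_hi a b d i = cell_lo a d i + d /\
  exists xi, cell_lo a d i <= xi <= cell_lo a d i + d /\ uni_prob f a b d i = d * Fc f a b xi.
Proof.
  intros Hd Hi. assert (Hh : cell_hi a b d i = cell_lo a d i + d).
  { rewrite cell_hi_full by auto. unfold cell_lo. rewrite S_INR. ring. }
  split; auto. rewrite prob_eq by (auto; lia). rewrite Hh.
  destruct (Fc_MVT (cell_lo a d i) (cell_lo a d i + d) ltac:(lra)) as [xi [Hxi Heq]].
  exists xi. split; auto. rewrite Heq. f_equal. ring.
Qed.


Lemma G_bound M : (forall x, Fc f a b x <= M) -> 1 <= M -> forall x, Rabs (Gc f a b x) <= 1 + M*M.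
Proof. intros HM HM1 x. unfold Gc. apply phi_bound; auto. split; [apply Fc_nonneg| apply HM]. Qed.

Lemma A_conv eps : 0 < eps -> exists d0, 0 < d0 /\ forall d, 0 < d < d0 -> d < b - a ->
  Rabs (fsum (ncells a b d) (fun i => uni_prob f a b d i * ln (uni_prob f a b d i / d)) - RInt (Gc f a b) a b) <= eps.
Proof.
  intros Heps. destruct Fc_bound as [M [HM1 HM]].
  set (C := 1 + M*M). assert (HC : 0 < C) by (unfold C; nra).
  pose proof hab as Hab.
  assert (He1 : 0 < eps / (2 * (b - a))) by (apply Rdiv_lt_0_compat; lra).
  destruct (Gc_UC (mkposreal _ He1)) as [rho Hrho]. simpl in Hrho.
  assert (Hd0 : 0 < Rmin rho (eps / (4 * C))) by (apply Rmin_glb_lt; [apply cond_pos| apply Rdiv_lt_0_compat; lra]).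
  exists (Rmin rho (eps / (4 * C))). split; auto.
  intros d Hd Hdba.
  assert (Hd' : 0 < d < b - a) by lra.
  assert (Hdr : d < rho) by (pose proof (Rmin_l rho (eps / (4 * C))); lra).
  assert (HdC : d * C <= eps / 4).
  { pose proof (Rmin_r rho (eps / (4 * C))). apply Rmult_le_reg_r with (/C); [apply Rinv_0_lt_compat; lra|].
    replace (d * C * / C) with d by (field; lra). replace (eps / 4 * / C) with (eps / (4 * C)) by (field; lra). lra. }
  destruct (ncells_facts a b d Hd') as [HN [Hn1 Hn2]].
  rewrite <- (cells_sum (Gc f a b) a b d Hd' Gc_exRInt).
  unfold Rminus at 1. rewrite <- fsum_opp, <- fsum_plus.
  destruct (ncells a b d) as [|n] eqn:EN; [lia|].
  rewrite fsum_S. rewrite S_INR in Hn1.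
  set (e := fun i => uni_prob f a b d i * ln (uni_prob f a b d i / d) + - RInt (Gc f a b) (cell_lo a d i) (cell_hi a b d i)).
  assert (Bfull : forall i, (i < n)%nat -> Rabs (e i) <= d * (eps / (2 * (b - a)))).
  { intros i Hi. destruct (prob_full d i Hd' ltac:(rewrite EN; lia)) as [Hh [xi [Hxi Hp]]].
    destruct (cell_lo_lt_hi a b d i Hd' ltac:(rewrite EN; lia)) as [[H1 H2] [H3 H4]].
    unfold e. rewrite Hh, Hp.
    replace (d * Fc f a b xi / d) with (Fc f a b xi) by (field; lra).
    replace (d * Fc f a b xi * ln (Fc f a b xi)) with (RInt (fun _ => Gc f a b xi) (cell_lo a d i) (cell_lo a d i + d)).
    2:{ rewrite RInt_const. simpl. unfold scal; simpl; unfold mult; simpl. unfold Gc, phi. ring. }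
    assert (Eq : RInt (fun _ => Gc f a b xi) (cell_lo a d i) (cell_lo a d i + d) + - RInt (Gc f a b) (cell_lo a d i) (cell_lo a d i + d)
       = RInt (fun x => Gc f a b xi - Gc f a b x) (cell_lo a d i) (cell_lo a d i + d)).
    { symmetry. apply (RInt_minus (fun _ => Gc f a b xi) (Gc f a b)); [apply ex_RInt_const| apply Gc_exRInt]. }
    rewrite Eq.
    eapply Rle_trans; [apply (abs_RInt_le_const _ _ _ (eps / (2 * (b - a))));
      [lra| exact (ex_RInt_minus (fun _ => Gc f a b xi) (Gc f a b) _ _ (ex_RInt_const _ _ _) (Gc_exRInt _ _))|]|].
    { intros t Ht. left. apply Hrho; try lra. apply Rabs_def1; lra. }
    right; ring. }
  assert (Blast : Rabs (e n) <= eps / 2).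
  { destruct (cell_lo_lt_hi a b d n Hd' ltac:(rewrite EN; lia)) as [[H1 H2] [H3 H4]].
    pose proof (prob_pos d n Hd' ltac:(rewrite EN; lia)).
    pose proof (prob_le M d n HM Hd' ltac:(rewrite EN; lia)).
    unfold e. eapply Rle_trans; [apply Rabs_triang|]. rewrite Rabs_Ropp.
    assert (Hp1 : Rabs (uni_prob f a b d n * ln (uni_prob f a b d n / d)) <= d * C).
    { replace (uni_prob f a b d n * ln (uni_prob f a b d n / d)) with (d * phi (uni_prob f a b d n / d)) by (unfold phi; field; lra).
      rewrite Rabs_mult, Rabs_pos_eq by lra. apply Rmult_le_compat_l; [lra|]. apply phi_bound; auto.
      split; [left; apply Rdiv_lt_0_compat; lra|]. apply Rmult_le_reg_r with d; [lra|].
      replace (uni_prob f a b d n / d * d) with (uni_prob f a b d n) by (field; lra). lra. }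
    assert (Hp2 : Rabs (RInt (Gc f a b) (cell_lo a d n) (cell_hi a b d n)) <= d * C).
    { eapply Rle_trans; [apply abs_RInt_le_const; [lra| apply Gc_exRInt| intros; apply G_bound; auto]|].
      apply Rmult_le_compat_r; lra. }
    lra. }
  eapply Rle_trans; [apply Rabs_triang|].
  assert (Rabs (fsum n e) <= INR n * (d * (eps / (2 * (b - a))))).
  { eapply Rle_trans; [apply fsum_abs|]. rewrite <- fsum_const. apply fsum_le. auto. }
  assert (INR n * (d * (eps / (2 * (b - a)))) <= eps / 2).
  { replace (INR n * (d * (eps / (2 * (b - a))))) with ((INR n * d) * (eps / (2 * (b - a)))) by ring.
    apply Rle_trans with ((b - a) * (eps / (2 * (b - a)))); [apply Rmult_le_compat_r; lra|].
    right. field. lra. }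
  change (Rabs (fsum n e) + Rabs (e n) <= eps). lra.
Qed.

Lemma B_bound : exists Bc, forall d, 0 < d < b - a ->
  fsum (ncells a b d) (fun i => uni_prob f a b d i * (log2 (uni_prob f a b d i / d))^2) <= Bc.
Proof.
  destruct Fc_bound as [M [HM1 HM]]. pose proof hab. pose proof ln2_pos as L2.
  set (K := (4 + M*M*M) / (ln 2 * ln 2)).
  exists (2 * (b - a) * K). intros d Hd.
  destruct (ncells_facts a b d Hd) as [HN [Hn1 Hn2]].
  apply Rle_trans with (fsum (ncells a b d) (fun _ => d * K)).
  - apply fsum_le. intros i Hi.
    pose proof (prob_pos d i Hd Hi). pose proof (prob_le M d i HM Hd Hi).
    set (u := uni_prob f a b d i / d).
    assert (Hu : 0 < u <= M).
    { unfold u. split; [apply Rdiv_lt_0_compat; lra|]. apply Rmult_le_reg_r with d; [lra|].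
      replace (uni_prob f a b d i / d * d) with (uni_prob f a b d i) by (field; lra). lra. }
    pose proof (psi_bound u M Hu HM1).
    replace (uni_prob f a b d i * log2 u ^ 2) with (d * (u * ln u ^ 2) / (ln 2 * ln 2)).
    2:{ unfold u, log2. field. split; lra. }
    unfold K. unfold Rdiv. rewrite Rmult_assoc. apply Rmult_le_compat_l; [lra|].
    apply Rmult_le_compat_r; [left; apply Rinv_0_lt_compat; nra| lra].
  - rewrite fsum_const. assert (0 <= K) by (unfold K; apply Rle_mult_inv_pos; nra).
    assert (INR (ncells a b d) * d <= 2 * (b - a)) by nra. nra.
Qed.

Lemma cellterm_eq d i : 0 < d < b - a -> (i < ncells a b d)%nat ->
  RInt (fun x => (x - cell_mid a b d i) ^ 2 * f x) (cell_lo a d i) (cell_hi a b d i) =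
  RInt (fun x => (x - cell_mid a b d i) ^ 2 * Fc f a b x) (cell_lo a d i) (cell_hi a b d i).
Proof.
  intros Hd Hi. destruct (cell_lo_lt_hi a b d i Hd Hi) as [[H1 H2] [H3 H4]].
  apply RInt_ext. rewrite Rmin_left, Rmax_right by lra.
  intros x Hx. rewrite Fc_eq; auto; lra.
Qed.

Lemma sqF_exRInt m u v : ex_RInt (fun x => (x - m) ^ 2 * Fc f a b x) u v.
Proof.
  apply (@ex_RInt_continuous R_CompleteNormedModule). intros z _.
  apply (continuous_mult (fun x => (x - m)^2) (Fc f a b)); [|apply Fc_cont].
  apply (ex_derive_continuous (fun x => (x-m)^2)). auto_derive. auto.
Qed.

Lemma sq_exRInt m u v : ex_RInt (fun x => (x - m) ^ 2) u v.
Proof.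
  apply (@ex_RInt_continuous R_CompleteNormedModule). intros z _.
  apply (ex_derive_continuous (fun x => (x-m)^2)). auto_derive. auto.
Qed.

Lemma D_upper d : 0 < d < b - a -> uni_distortion f a b d <= d * d / 4.
Proof.
  intros Hd. unfold uni_distortion.
  apply Rle_trans with (fsum (ncells a b d) (fun i => d * d / 4 * uni_prob f a b d i)).
  - apply fsum_le. intros i Hi. rewrite cellterm_eq, prob_eq by auto.
    destruct (cell_lo_lt_hi a b d i Hd Hi) as [[H1 H2] [H3 H4]].
    apply Rle_trans with (RInt (fun x => d * d / 4 * Fc f a b x) (cell_lo a d i) (cell_hi a b d i)).
    + apply RInt_le; [lra| apply sqF_exRInt| |].
      * apply (ex_RInt_scal (V := R_NormedModule)). apply Fc_exRInt.
      * intros x Hx.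
        apply Rmult_le_compat_r; [apply Fc_nonneg|]. unfold cell_mid.
        nra.
    + right. apply (RInt_scal (V := R_CompleteNormedModule) (Fc f a b)). apply Fc_exRInt.
  - rewrite fsum_scal, prob_sum by auto. lra.
Qed.

Lemma D_lower : exists d0, 0 < d0 /\ forall d, 0 < d < d0 -> d < b - a ->
  d * d / 32 <= uni_distortion f a b d.
Proof.
  destruct Fc_bound as [M [HM1 HM]]. pose proof hab.
  assert (He : 0 < / (4 * (b - a))) by (apply Rinv_0_lt_compat; lra).
  destruct (Fc_UC (mkposreal _ He)) as [rho Hrho]. simpl in Hrho.
  assert (Hd0 : 0 < Rmin rho (/ (4 * M))) by (apply Rmin_glb_lt; [apply cond_pos| apply Rinv_0_lt_compat; lra]).
  exists (Rmin rho (/ (4 * M))). split; auto. intros d Hd Hdba.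
  assert (Hd' : 0 < d < b - a) by lra.
  assert (Hdr : d < rho) by (pose proof (Rmin_l rho (/ (4 * M))); lra).
  assert (HdM : M * d <= / 4).
  { pose proof (Rmin_r rho (/ (4 * M))). apply Rmult_le_reg_r with (/M); [apply Rinv_0_lt_compat; lra|].
    replace (M * d * / M) with d by (field; lra). replace (/ 4 * / M) with (/ (4 * M)) by (field; lra). lra. }
  destruct (ncells_facts a b d Hd') as [HN [Hn1 Hn2]].
  pose proof (prob_sum d Hd') as Hsum.
  unfold uni_distortion.
  assert (Hlast : forall n, ncells a b d = S n ->
     0 <= RInt (fun x => (x - cell_mid a b d n) ^ 2 * f x) (cell_lo a d n) (cell_hi a b d n)).
  { intros n En. destruct (cell_lo_lt_hi a b d n Hd' ltac:(rewrite En; lia)) as [[H1 H2] [H3 H4]].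
    rewrite cellterm_eq by (auto; rewrite En; lia). apply RInt_ge_0; [lra| apply sqF_exRInt|].
    intros x _. apply Rmult_le_pos; [apply pow2_ge_0| apply Fc_nonneg]. }
  assert (Hfull : forall i, (S i < ncells a b d)%nat ->
     d * d / 12 * uni_prob f a b d i - d * d * d / 12 * / (4 * (b - a)) <=
     RInt (fun x => (x - cell_mid a b d i) ^ 2 * f x) (cell_lo a d i) (cell_hi a b d i)).
  { intros i Hi. destruct (prob_full d i Hd' Hi) as [Hh [xi [Hxi Hp]]].
    destruct (cell_lo_lt_hi a b d i Hd' ltac:(lia)) as [[H1 H2] [H3 H4]].
    rewrite cellterm_eq by (auto; lia). rewrite Hp.
    unfold cell_mid. rewrite Hh. rewrite Hh in H3.
    set (lo := cell_lo a d i) in *.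
    set (c := Fc f a b xi - / (4 * (b - a))).
    apply Rle_trans with (RInt (fun x => c * (x - (lo + (lo + d)) / 2) ^ 2) lo (lo + d)).
    - replace (RInt (fun x => c * (x - (lo + (lo + d)) / 2) ^ 2) lo (lo + d)) with (c * RInt (fun x => (x - (lo + (lo + d)) / 2) ^ 2) lo (lo + d)).
      2:{ symmetry. apply (RInt_scal (V := R_CompleteNormedModule) (fun x => (x - (lo + (lo + d)) / 2) ^ 2)). apply sq_exRInt. }
      rewrite sq_int. unfold c. right. field. lra.
    - apply RInt_le; [lra| |apply sqF_exRInt|].
      + apply (ex_RInt_scal (V := R_NormedModule)). apply sq_exRInt.
      + intros x Hx. rewrite Rmult_comm. apply Rmult_le_compat_l; [apply pow2_ge_0|].
        unfold c. assert (Rabs (xi - x) < rho) by (apply Rabs_def1; lra).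
        specialize (Hrho xi x ltac:(lra) ltac:(lra) H0). apply Rabs_def2 in Hrho. lra. }
  destruct (ncells a b d) as [|n] eqn:EN; [lia|].
  rewrite fsum_S. specialize (Hlast n eq_refl). rewrite S_INR in Hn1.
  assert (Hs : fsum n (fun i => d * d / 12 * uni_prob f a b d i + - (d * d * d / 12 * / (4 * (b - a)))) <=
     fsum n (fun i => RInt (fun x => (x - cell_mid a b d i) ^ 2 * f x) (cell_lo a d i) (cell_hi a b d i))).
  { apply fsum_le. intros i Hi. apply Hfull. lia. }
  rewrite fsum_plus, fsum_scal, fsum_const in Hs.
  rewrite fsum_S in Hsum.
  pose proof (prob_le M d n HM Hd' ltac:(rewrite EN; lia)).
  assert (INR n * d <= b - a) by lra.
  assert (INR n * - (d * d * d / 12 * / (4 * (b - a))) >= - (d * d / 48)).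
  { replace (INR n * - (d * d * d / 12 * / (4 * (b - a)))) with (- ((INR n * d) * (d * d / 48) * / (b - a))) by (field; lra).
    apply Ropp_le_ge_contravar. apply Rmult_le_reg_r with (b - a); [lra|].
    rewrite Rmult_assoc, Rinv_l, Rmult_1_r by lra.
    assert (0 <= d * d / 48) by nra. nra. }
  assert (fsum n (uni_prob f a b d) >= 3/4) by lra.
  assert (d * d / 12 * fsum n (uni_prob f a b d) >= d * d / 16) by nra.
  assert (0 <= d * d) by nra. lra.
Qed.

Lemma abs_le_split x y : Rabs x <= y -> - y <= x <= y.
Proof. intros H. pose proof (Rle_abs x). pose proof (Rle_abs (- x)). rewrite Rabs_Ropp in H1. lra. Qed.

Lemma log2_lt x y : 0 < x -> x < y -> log2 x < log2 y.
Proof.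
  intros. unfold log2. pose proof ln2_pos. apply Rmult_lt_compat_r; [apply Rinv_0_lt_compat; auto|].
  apply ln_increasing; auto.
Qed.

Lemma log2_le x y : 0 < x -> x <= y -> log2 x <= log2 y.
Proof. intros Hx [H|H]; [left; apply log2_lt; auto| subst; lra]. Qed.

Lemma log2_Rpower x : log2 (Rpower 2 x) = x.
Proof. unfold log2. rewrite ln_Rpower. pose proof ln2_pos. field. lra. Qed.

Lemma Iflf_eq : RInt (fun x => f x * log2 (f x)) a b = / ln 2 * RInt (Gc f a b) a b.
Proof.
  pose proof hab.
  rewrite (RInt_ext _ (fun x => / ln 2 * Gc f a b x)).
  - apply (RInt_scal (V := R_CompleteNormedModule) (Gc f a b)). apply Gc_exRInt.
  - rewrite Rmin_left, Rmax_right by lra. intros x Hx. unfold Gc, phi, log2.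
    rewrite Fc_eq by lra. change (f x * (ln (f x) / ln 2) = / ln 2 * (f x * ln (f x))). field. pose proof ln2_pos; lra.
Qed.

Lemma limit2_eps eps : 0 < eps -> exists d0, 0 < d0 /\ forall d, 0 < d < d0 ->
  Rabs (AoI_uni_opt f a b d + 3 / 2 * log2 d - 3 / 2 * diff_entropy f a b) < eps.
Proof.
  intros Heps. pose proof hab. pose proof ln2_pos as L2.
  destruct B_bound as [Bc HBc].
  set (Bp := Rmax Bc 1). assert (HBp : 0 < Bp) by (unfold Bp; pose proof (Rmax_r Bc 1); lra).
  set (I := / ln 2 * RInt (Gc f a b) a b).
  set (e1 := Rmin 1 (eps / 4)). assert (He1 : 0 < e1) by (unfold e1; apply Rmin_glb_lt; lra).
  destruct (A_conv (ln 2 * e1) ltac:(nra)) as [dA [HdA HA']].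
  set (Lam := Bp / eps + Rabs I + 1).
  set (d2 := Rpower 2 (- Lam)). assert (Hd2 : 0 < d2) by apply exp_pos.
  set (d0 := Rmin dA (Rmin (b - a) d2)).
  assert (Hd0 : 0 < d0) by (unfold d0; repeat apply Rmin_glb_lt; lra).
  exists d0. split; auto. intros d Hd.
  assert (HdA' : d < dA) by (pose proof (Rmin_l dA (Rmin (b - a) d2)); unfold d0 in Hd; lra).
  assert (Hdba : d < b - a) by (pose proof (Rmin_r dA (Rmin (b - a) d2)); pose proof (Rmin_l (b - a) d2); unfold d0 in Hd; lra).
  assert (Hdd2 : d < d2) by (pose proof (Rmin_r dA (Rmin (b - a) d2)); pose proof (Rmin_r (b - a) d2); unfold d0 in Hd; lra).
  assert (Hd' : 0 < d < b - a) by lra.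
  assert (HL : log2 d < - Lam) by (rewrite <- (log2_Rpower (- Lam)); fold d2; apply log2_lt; lra).
  specialize (HA' d (conj (proj1 Hd) HdA') Hdba).
  specialize (HBc d Hd').
  destruct (ncells_facts a b d Hd') as [HN _].
  destruct (AoI_decomp (ncells a b d) (uni_prob f a b d) d HN (fun i Hi => prob_pos d i Hd' Hi) (prob_sum d Hd') (proj1 Hd))
    as [HH [Hlo Hhi]].
  set (A := fsum (ncells a b d) (fun i => uni_prob f a b d i * log2 (uni_prob f a b d i / d))) in *.
  set (B := fsum (ncells a b d) (fun i => uni_prob f a b d i * log2 (uni_prob f a b d i / d) ^ 2)) in *.
  assert (HAeq : A = / ln 2 * fsum (ncells a b d) (fun i => uni_prob f a b d i * ln (uni_prob f a b d i / d))).
  { unfold A. rewrite <- fsum_scal. apply fsum_ext. intros. unfold log2. field. lra. }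
  assert (HAI : Rabs (A - I) <= e1).
  { rewrite HAeq. unfold I. rewrite <- Rmult_minus_distr_l, Rabs_mult, Rabs_pos_eq by (left; apply Rinv_0_lt_compat; lra).
    apply Rmult_le_reg_l with (ln 2); auto. rewrite <- Rmult_assoc, Rinv_r, Rmult_1_l by lra. auto. }
  assert (He1' : e1 <= 1 /\ e1 <= eps / 4) by (unfold e1; split; [apply Rmin_l| apply Rmin_r]).
  assert (HAb : A <= Rabs I + 1) by (apply abs_le_split in HAI; pose proof (Rle_abs I); lra) .
  assert (HHl : Bp / eps < - log2 d - A) by (unfold Lam in HL; lra).
  assert (HBB : B / (2 * (- log2 d - A)) < eps / 2).
  { assert (B <= Bp) by (unfold Bp; pose proof (Rmax_l Bc 1); lra).
    assert (Bp < eps * (- log2 d - A)).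
    { apply Rmult_lt_reg_r with (/ eps); [apply Rinv_0_lt_compat; lra|].
      replace (eps * (- log2 d - A) * / eps) with (- log2 d - A) by (field; lra). exact HHl. }
    apply Rmult_lt_reg_r with (2 * (- log2 d - A)); [lra|].
    unfold Rdiv. rewrite Rmult_assoc, Rinv_l, Rmult_1_r by lra. nra. }
  assert (Hh : diff_entropy f a b = - I) by (unfold diff_entropy, I; rewrite Iflf_eq; ring).
  rewrite Hh. unfold AoI_uni_opt.
  apply abs_le_split in HAI.
  apply Rabs_def1; lra.
Qed.

Lemma log2_sq_div d k : 0 < d -> log2 (d * d / 2 ^ k) = 2 * log2 d - INR k.
Proof.
  intros Hd. pose proof ln2_pos. unfold log2. unfold Rdiv.
  rewrite ln_mult, ln_mult, ln_Rinv, ln_pow; try lra; try (apply Rinv_0_lt_compat); try apply pow_lt; try nra.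
  field. lra.
Qed.

Lemma limit1_eps eps : 0 < eps -> exists d0, 0 < d0 /\ forall d, 0 < d < d0 ->
  Rabs (AoI_uni_opt f a b d / log2 (uni_distortion f a b d) - - 3 / 4) < eps.
Proof.
  intros Heps. pose proof hab.
  destruct (limit2_eps 1 ltac:(lra)) as [d1 [Hd1 H1]].
  destruct D_lower as [d3 [Hd3 H3]].
  set (R := Rabs (3 / 2 * diff_entropy f a b) + 1).
  assert (HR : 0 < R) by (unfold R; pose proof (Rabs_pos (3 / 2 * diff_entropy f a b)); lra).
  set (Lam := (R + 4) / (2 * eps) + 1).
  set (d4 := Rpower 2 (- Lam)). assert (Hd4 : 0 < d4) by apply exp_pos.
  set (d0 := Rmin (Rmin d1 d3) (Rmin d4 (b - a))).
  assert (Hd0 : 0 < d0) by (unfold d0; repeat apply Rmin_glb_lt; lra).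
  exists d0. split; auto. intros d Hd.
  pose proof (Rmin_l (Rmin d1 d3) (Rmin d4 (b - a))). pose proof (Rmin_r (Rmin d1 d3) (Rmin d4 (b - a))).
  pose proof (Rmin_l d1 d3). pose proof (Rmin_r d1 d3). pose proof (Rmin_l d4 (b - a)). pose proof (Rmin_r d4 (b - a)).
  unfold d0 in Hd.
  assert (Hd' : 0 < d < b - a) by lra.
  specialize (H1 d ltac:(lra)). specialize (H3 d ltac:(lra) ltac:(lra)).
  pose proof (D_upper d Hd') as HDu.
  assert (HL : log2 d < - Lam) by (rewrite <- (log2_Rpower (- Lam)); fold d4; apply log2_lt; lra).
  assert (Hdd : 0 < d * d / 32) by (pose proof (proj1 Hd); apply Rdiv_lt_0_compat; nra).
  set (D := uni_distortion f a b d) in *.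
  assert (HY1 : 2 * log2 d - 5 <= log2 D).
  { replace (2 * log2 d - 5) with (log2 (d * d / 2 ^ 5)) by (rewrite log2_sq_div by lra; simpl; ring).
    apply log2_le; [simpl; lra| simpl; lra]. }
  assert (HY2 : log2 D <= 2 * log2 d - 2).
  { replace (2 * log2 d - 2) with (log2 (d * d / 2 ^ 2)) by (rewrite log2_sq_div by lra; simpl; ring).
    apply log2_le; [lra| simpl; lra]. }
  set (T := AoI_uni_opt f a b d + 3 / 2 * log2 d) in *.
  assert (HT : Rabs T <= R).
  { unfold R. apply Rabs_def2 in H1. apply Rabs_le.
    pose proof (abs_le_split (3 / 2 * diff_entropy f a b) _ (Rle_refl _)). lra. }
  set (Y := log2 D) in *. set (X := AoI_uni_opt f a b d) in *.
  assert (HY : Y < 0) by (unfold Lam in HL; assert (0 <= (R + 4) / (2 * eps)) by (apply Rle_mult_inv_pos; lra); lra).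
  assert (HXY : Rabs (X + 3 / 4 * Y) <= R + 4).
  { replace (X + 3 / 4 * Y) with (T + 3 / 4 * (Y - 2 * log2 d)) by (unfold T, X; lra).
    eapply Rle_trans; [apply Rabs_triang|]. rewrite Rabs_mult, (Rabs_pos_eq (3/4)) by lra.
    assert (Rabs (Y - 2 * log2 d) <= 5) by (apply Rabs_le; lra). lra. }
  assert (HYb : (R + 4) < eps * - Y).
  { assert ((R + 4) / (2 * eps) * (2 * eps) = R + 4) by (field; lra).
    unfold Lam in HL. nra. }
  set (q := X / Y - - 3 / 4).
  assert (Hq : q * Y = X + 3 / 4 * Y) by (unfold q; field; lra).
  assert (Rabs q * - Y <= R + 4).
  { rewrite <- (Rabs_left Y) by lra. rewrite <- Rabs_mult, Hq. auto. }
  pose proof (Rabs_pos q). nra.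
Qed.

End Ana.

Lemma eps_filterlim (h : R -> R) l :
  (forall eps, 0 < eps -> exists d0, 0 < d0 /\ forall d, 0 < d < d0 -> Rabs (h d - l) < eps) ->
  filterlim h (at_right 0) (locally l).
Proof.
  intros H. apply filterlim_locally. intros eps.
  destruct (H eps (cond_pos eps)) as [d0 [Hd0 Hd]].
  exists (mkposreal d0 Hd0). intros y Hy Hpos. apply ball_R. apply Hd.
  change (Rabs (y - 0) < d0) in Hy. rewrite Rminus_0_r in Hy. apply Rabs_def2 in Hy. lra.
Qed.

Theorem theorem2 (f : R -> R) (a b : R) :
  is_pdf_with_support f a b ->
  condition_A f a b ->
  condition_B f a b ->
  filterlim (fun d => AoI_uni_opt f a b d / log2 (uni_distortion f a b d))
    (at_right 0) (locally (- 3 / 4)) /\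
  filterlim (fun d => AoI_uni_opt f a b d + 3 / 2 * log2 d)
    (at_right 0) (locally (3 / 2 * diff_entropy f a b)).
Proof.
  intros Hpdf HA _. split; apply eps_filterlim.
  - apply limit1_eps; auto.
  - apply limit2_eps; auto.
Qed.
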